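(* Let $(M,\nabla_0)$ be a flat hom-connection with respect to a differential graded algebra $\Omega A$, with extensions $\nabla_n:\mathrm{Hom}_A(\Omega^{n+1}A,M)\to\mathrm{Hom}_A(\Omega^nA,M)$, $\nabla_n(f)(\omega)=\nabla_0(f\omega)+(-1)^{n+1}f(d\omega)$. Then: (a) $\nabla_{n-1}\circ\nabla_n=0$ for all $n\ge1$, so $\cdots\xrightarrow{\nabla_2}\mathrm{Hom}_A(\Omega^2A,M)\xrightarrow{\nabla_1}\mathrm{Hom}_A(\Omega^1A,M)\xrightarrow{\nabla_0}M$ is a chain complex; denote its homology by $H_*(A;M,\nabla_* )$ (with $\mathrm{Hom}_A(\Omega^kA,M)$ in degree $k$). (b) The right action of $\Omega A$ on $\bigoplus_{n\ge0}\mathrm{Hom}_A(\Omega^nA,M)$, $(f\omega)(\omega')=f(\omega\omega')$, descends to a right action of the cohomology $H^*(A)$ of $(\Omega A,d)$ on $H_*(A;M,\nabla_* )$, given by $[f]\cdot[\omega]=[f\omega]$.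
   Context: All algebras are associative and unital over a field $k$. $\Omega A=\bigoplus_{n\ge0}\Omega^nA$, $\Omega^0A=A$, is a differential graded algebra with degree-one differential $d$, $d^2=0$, satisfying the graded Leibniz rule. $M$ is a right $A$-module; $\mathrm{Hom}_A$ denotes right $A$-linear maps; $\mathrm{Hom}_A(\Omega^1A,M)$ is a right $A$-module via $(fa)(\omega)=f(a\omega)$; $\mathrm{Hom}_A(A,M)\cong M$. For $\omega\in\Omega^nA$ and $f\in\mathrm{Hom}_A(\Omega^{n+m}A,M)$, $f\omega\in\mathrm{Hom}_A(\Omega^mA,M)$ is $(f\omega)(\omega')=f(\omega\omega')$. A hom-connection is a $k$-linear map $\nabla_0:\mathrm{Hom}_A(\Omega^1A,M)\to M$ with $\nabla_0(fa)=\nabla_0(f)a+f(da)$ for all $f$ and $a\in A$. Its curvature is $F=\nabla_0\circ\nabla_1:\mathrm{Hom}_A(\Omega^2A,M)\to M$, and the hom-connection is called flat if $F=0$. *)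

(* Defs.v *)
From HB Require Import structures.
From mathcomp Require Import all_boot all_algebra.
Set Implicit Arguments. Unset Strict Implicit. Unset Printing Implicit Defensive.
Import GRing.Theory.
Local Open Scope ring_scope.

(* by conversion are handled by the transport  dcast.                        *)

Definition dcast (k : fieldType) (Om : nat -> lmodType k) (m n : nat)
  (e : m = n) (x : Om m) : Om n :=
  match e in _ = n0 return Om n0 with erefl => x end.

Definition is_dga (k : fieldType) (Om : nat -> lmodType k)
  (mul : forall n m, Om n -> Om m -> Om (n + m)%N) (one : Om 0%N)
  (d : forall n, Om n -> Om n.+1) : Prop :=
  (forall n m (x y : Om n) (z : Om m), mul _ _ (x + y) z = mul _ _ x z + mul _ _ y z) /\
  (forall n m (x : Om n) (y z : Om m), mul _ _ x (y + z) = mul _ _ x y + mul _ _ x z) /\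
  (forall n m (c : k) (x : Om n) (y : Om m), mul _ _ (c *: x) y = c *: mul _ _ x y) /\
  (forall n m (c : k) (x : Om n) (y : Om m), mul _ _ x (c *: y) = c *: mul _ _ x y) /\
  (forall n m p (x : Om n) (y : Om m) (z : Om p),
      mul _ _ (mul _ _ x y) z = dcast (addnA n m p) (mul _ _ x (mul _ _ y z))) /\
  (forall n (x : Om n), mul _ _ one x = x) /\
  (forall n (x : Om n), dcast (addn0 n) (mul _ _ x one) = x) /\
  (forall n (c : k) (x y : Om n), d n (c *: x + y) = c *: d n x + d n y) /\
  (forall n (x : Om n), d _ (d n x) = 0) /\
  (forall n m (x : Om n) (y : Om m),
     d _ (mul _ _ x y) =
     mul _ _ (d n x) y + (-1) ^+ n *: dcast (addnS n m) (mul _ _ x (d m y))).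

Definition is_rmodule (k : fieldType) (Om : nat -> lmodType k)
  (mul : forall n m, Om n -> Om m -> Om (n + m)%N) (one : Om 0%N)
  (M : lmodType k) (act : M -> Om 0%N -> M) : Prop :=
  (forall (x y : M) a, act (x + y) a = act x a + act y a) /\
  (forall (x : M) a b, act x (a + b) = act x a + act x b) /\
  (forall (c : k) (x : M) a, act (c *: x) a = c *: act x a) /\
  (forall (c : k) (x : M) a, act x (c *: a) = c *: act x a) /\
  (forall x : M, act x one = x) /\
  (forall (x : M) a b, act (act x a) b = act x (mul _ _ a b)).

Definition is_hom (k : fieldType) (Om : nat -> lmodType k)
  (mul : forall n m, Om n -> Om m -> Om (n + m)%N)
  (M : lmodType k) (act : M -> Om 0%N -> M) (n : nat) (f : Om n -> M) : Prop :=
  (forall x y : Om n, f (x + y) = f x + f y) /\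
  (forall (x : Om n) (a : Om 0%N), f (dcast (addn0 n) (mul _ _ x a)) = act (f x) a).

Definition homact (k : fieldType) (Om : nat -> lmodType k)
  (mul : forall n m, Om n -> Om m -> Om (n + m)%N) (M : lmodType k)
  (n m : nat) (f : Om (n + m)%N -> M) (w : Om n) : Om m -> M :=
  fun w' => f (mul _ _ w w').

Definition is_hom_connection (k : fieldType) (Om : nat -> lmodType k)
  (mul : forall n m, Om n -> Om m -> Om (n + m)%N)
  (d : forall n, Om n -> Om n.+1)
  (M : lmodType k) (act : M -> Om 0%N -> M) (nabla0 : (Om 1%N -> M) -> M) : Prop :=
  (forall (c : k) (f g : Om 1%N -> M), is_hom mul act f -> is_hom mul act g ->
     nabla0 (fun w => c *: f w + g w) = c *: nabla0 f + nabla0 g) /\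
  (forall (f : Om 1%N -> M) (a : Om 0%N), is_hom mul act f ->
     nabla0 (@homact _ _ mul M 0 1 f a) = act (nabla0 f) a + f (d 0%N a)).

Definition nablan (k : fieldType) (Om : nat -> lmodType k)
  (mul : forall n m, Om n -> Om m -> Om (n + m)%N)
  (d : forall n, Om n -> Om n.+1)
  (M : lmodType k) (nabla0 : (Om 1%N -> M) -> M) (n : nat) (f : Om n.+1 -> M)
  : Om n -> M :=
  fun w => nabla0 (fun w' => f (dcast (addn1 n) (mul _ _ w w')))
           + (-1) ^+ n.+1 *: f (d n w).

Arguments nablan {k Om} mul d {M} nabla0 n f _.

Definition is_flat (k : fieldType) (Om : nat -> lmodType k)
  (mul : forall n m, Om n -> Om m -> Om (n + m)%N)
  (d : forall n, Om n -> Om n.+1)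
  (M : lmodType k) (act : M -> Om 0%N -> M) (nabla0 : (Om 1%N -> M) -> M) : Prop :=
  forall f : Om 2%N -> M, is_hom mul act f -> nabla0 (nablan mul d nabla0 1 f) = 0.

(* Degree-0 term is Hom_A(A,M) (identified with M via g |-> g 1, under which
   nabla_0 viewed with values in Hom_A(A,M), a |-> nabla0(f) a, is nabla0). *)
Definition hcycle (k : fieldType) (Om : nat -> lmodType k)
  (mul : forall n m, Om n -> Om m -> Om (n + m)%N)
  (d : forall n, Om n -> Om n.+1)
  (M : lmodType k) (nabla0 : (Om 1%N -> M) -> M) (m : nat) : (Om m -> M) -> Prop :=
  match m return (Om m -> M) -> Prop with
  | 0 => fun _ => True
  | j.+1 => fun g => nablan mul d nabla0 j g = (fun _ => 0)
  end.

Definition hboundary (k : fieldType) (Om : nat -> lmodType k)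
  (mul : forall n m, Om n -> Om m -> Om (n + m)%N)
  (d : forall n, Om n -> Om n.+1)
  (M : lmodType k) (act : M -> Om 0%N -> M) (nabla0 : (Om 1%N -> M) -> M)
  (m : nat) (g : Om m -> M) : Prop :=
  exists h : Om m.+1 -> M, is_hom mul act h /\ g = nablan mul d nabla0 m h.

Definition dclosed (k : fieldType) (Om : nat -> lmodType k)
  (d : forall n, Om n -> Om n.+1) (n : nat) (w : Om n) : Prop := d n w = 0.

Definition dexact (k : fieldType) (Om : nat -> lmodType k)
  (d : forall n, Om n -> Om n.+1) (n : nat) : Om n -> Prop :=
  match n return Om n -> Prop with
  | 0 => fun w => w = 0
  | j.+1 => fun w => exists v : Om j, d j v = w
  end.

(* Main.v *)
Require Import Defs.
From HB Require Import structures.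
From mathcomp Require Import all_boot all_algebra.
From Stdlib Require Import FunctionalExtensionality.
Import GRing.Theory.
Local Open Scope ring_scope.
Set Implicit Arguments. Unset Strict Implicit. Unset Printing Implicit Defensive.
Lemma dcast_irr (k : fieldType) (Om : nat -> lmodType k) a b (e1 e2 : a = b) (x : Om a) :
  dcast e1 x = dcast e2 x.
Proof. by rewrite (eq_irrelevance e1 e2). Qed.

Lemma dcast_id (k : fieldType) (Om : nat -> lmodType k) a (e : a = a) (x : Om a) :
  dcast e x = x.
Proof. by rewrite (eq_irrelevance e erefl). Qed.

Lemma dcast_comp (k : fieldType) (Om : nat -> lmodType k) a b c (e1 : a = b) (e2 : b = c) (x : Om a) :
  dcast e2 (dcast e1 x) = dcast (etrans e1 e2) x.
Proof. by case: c / e2; case: b / e1. Qed.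

Lemma dcastD (k : fieldType) (Om : nat -> lmodType k) a b (e : a = b) (x y : Om a) :
  dcast e (x + y) = dcast e x + dcast e y.
Proof. by case: b / e. Qed.

Lemma dcastZ (k : fieldType) (Om : nat -> lmodType k) a b (e : a = b) c (x : Om a) :
  dcast e (c *: x) = c *: dcast e x.
Proof. by case: b / e. Qed.

Lemma dcast0 (k : fieldType) (Om : nat -> lmodType k) a b (e : a = b) :
  dcast e (0 : Om a) = 0.
Proof. by case: b / e. Qed.

Lemma dcast_mull (k : fieldType) (Om : nat -> lmodType k)
  (mul : forall n m, Om n -> Om m -> Om (n + m)%N) a b m (e : a = b) (x : Om a) (y : Om m) :
  mul _ _ (dcast e x) y = dcast (f_equal (fun t => (t + m)%N) e) (mul _ _ x y).
Proof. by case: b / e. Qed.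

Lemma dcast_mulr (k : fieldType) (Om : nat -> lmodType k)
  (mul : forall n m, Om n -> Om m -> Om (n + m)%N) a b n (e : a = b) (x : Om n) (y : Om a) :
  mul _ _ x (dcast e y) = dcast (f_equal (fun t => (n + t)%N) e) (mul _ _ x y).
Proof. by case: b / e. Qed.

Lemma dcast_d (k : fieldType) (Om : nat -> lmodType k)
  (d : forall n, Om n -> Om n.+1) a b (e : a = b) (x : Om a) :
  d _ (dcast e x) = dcast (f_equal S e) (d _ x).
Proof. by case: b / e. Qed.

Lemma dcast_fun (k : fieldType) (Om : nat -> lmodType k) (M : Type) a b (e : a = b) (f : Om b -> M) (x : Om a) :
  f (dcast e x) = (fun y : Om a => f (dcast e y)) x.
Proof. by []. Qed.

Section S.
Unset Implicit Arguments.
Variables (k : fieldType) (Om : nat -> lmodType k)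
  (mul : forall n m, Om n -> Om m -> Om (n + m)%N) (one : Om 0%N)
  (d : forall n, Om n -> Om n.+1)
  (M : lmodType k) (act : M -> Om 0%N -> M) (nabla0 : (Om 1%N -> M) -> M).
Set Implicit Arguments.
Hypothesis Hdga : is_dga mul one d.
Hypothesis Hmod : is_rmodule mul one act.
Hypothesis Hcon : is_hom_connection mul d act nabla0.

Lemma mulDl n m (x y : Om n) (z : Om m) : mul _ _ (x + y) z = mul _ _ x z + mul _ _ y z.
Proof. by case: Hdga. Qed.
Lemma mulDr n m (x : Om n) (y z : Om m) : mul _ _ x (y + z) = mul _ _ x y + mul _ _ x z.
Proof. by case: Hdga => _ []. Qed.
Lemma mulA n m p (x : Om n) (y : Om m) (z : Om p) :
      mul _ _ (mul _ _ x y) z = dcast (addnA n m p) (mul _ _ x (mul _ _ y z)).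
Proof. by case: Hdga => _ [] _ [] _ [] _ []. Qed.
Lemma dD n (x y : Om n) : d n (x + y) = d n x + d n y.
Proof.
case: Hdga => _ [] _ [] _ [] _ [] _ [] _ [] _ [] H _.
by have := H n 1 x y; rewrite !scale1r.
Qed.
Lemma dd n (x : Om n) : d _ (d n x) = 0.
Proof. by case: Hdga => _ [] _ [] _ [] _ [] _ [] _ [] _ [] _ []. Qed.
Lemma leib n m (x : Om n) (y : Om m) :
     d _ (mul _ _ x y) =
     mul _ _ (d n x) y + (-1) ^+ n *: dcast (addnS n m) (mul _ _ x (d m y)).
Proof. by case: Hdga => _ [] _ [] _ [] _ [] _ [] _ [] _ [] _ []. Qed.
Lemma mul0l n m (y : Om m) : mul n _ 0 y = 0.
Proof. have H := mulDl (0 : Om n) 0 y; rewrite addr0 in H.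
by apply: (@addrI _ (mul n _ 0 y)); rewrite addr0 -H. Qed.
Lemma mul0r n m (y : Om n) : mul _ m y 0 = 0.
Proof. have H := mulDr y (0 : Om m) 0; rewrite addr0 in H.
by apply: (@addrI _ (mul _ m y 0)); rewrite addr0 -H. Qed.

Lemma actDl (x y : M) a : act (x + y) a = act x a + act y a.
Proof. by case: Hmod. Qed.
Lemma actZ c (x : M) a : act (c *: x) a = c *: act x a.
Proof. by case: Hmod => _ [] _ []. Qed.
Lemma act0 a : act 0 a = 0.
Proof. have H := actDl 0 0 a; rewrite addr0 in H.
by apply: (@addrI _ (act 0 a)); rewrite addr0 -H. Qed.

Definition hom n (f : Om n -> M) := is_hom mul act f.

Lemma homD n f (x y : Om n) : hom f -> f (x + y) = f x + f y.
Proof. by case. Qed.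
Lemma homA n f (x : Om n) a : hom f -> f (dcast (addn0 n) (mul _ _ x a)) = act (f x) a.
Proof. by case. Qed.
Lemma hom0 n f : hom f -> f (0 : Om n) = 0.
Proof. move=> hf; have H := @homD n f 0 0 hf; rewrite addr0 in H.
by apply: (@addrI _ (f 0)); rewrite addr0 -H. Qed.
Lemma homN n f (x : Om n) : hom f -> f (- x) = - f x.
Proof. move=> hf; apply: (@addrI _ (f x)); by rewrite -homD // !subrr hom0. Qed.
Lemma homS n f (x : Om n) j : hom f -> f ((-1) ^+ j *: x) = (-1) ^+ j *: f x.
Proof.
move=> hf; elim: j => [|j IH]; first by rewrite !expr0 !scale1r.
by rewrite !exprS !mulN1r !scaleNr homN // IH.
Qed.
Lemma homcast a n (f : Om n -> M) (e : a = n) : hom f -> hom (fun x : Om a => f (dcast e x)).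
Proof. by move: f; case: n / e. Qed.

Lemma hom_zero n : hom (fun _ : Om n => 0).
Proof. by split => *; rewrite ?addr0 ?act0. Qed.

Lemma hom_lin n c (f g : Om n -> M) : hom f -> hom g -> hom (fun w => c *: f w + g w).
Proof.
move=> hf hg; split=> [x y|x a].
  by rewrite !homD // scalerDr addrACA.
by rewrite !homA // actDl actZ.
Qed.

Lemma hom_homact n m N (f : Om N -> M) (w : Om n) (e : (n + m)%N = N) :
  hom f -> hom (fun x : Om m => f (dcast e (mul _ _ w x))).
Proof.
move=> hf; split=> [x y|x a]; first by rewrite mulDr dcastD homD.
rewrite -homA // dcast_mull dcast_mulr mulA !dcast_comp.
by congr (f _); apply: dcast_irr.
Qed.

Lemma nab0L c (f g : Om 1 -> M) : hom f -> hom g ->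
  nabla0 (fun w => c *: f w + g w) = c *: nabla0 f + nabla0 g.
Proof. by case: Hcon => H _; apply: H. Qed.
Lemma nab00 : nabla0 (fun _ => 0) = 0.
Proof.
have := nab0L 1 (@hom_zero 1) (@hom_zero 1).
have -> : (fun _ : Om 1 => 1 *: (0 : M) + 0) = fun _ => 0.
  by apply: functional_extensionality => x; rewrite addr0 scaler0.
rewrite scale1r => H; apply: (@addrI _ (nabla0 (fun _ => 0))).
by rewrite addr0 -{1}H.
Qed.
Lemma nab0D (f g : Om 1 -> M) : hom f -> hom g ->
  nabla0 (fun w => f w + g w) = nabla0 f + nabla0 g.
Proof.
move=> hf hg; rewrite -[nabla0 f]scale1r -nab0L //.
by congr nabla0; apply: functional_extensionality => x; rewrite scale1r.
Qed.
Lemma nab0Z c (f : Om 1 -> M) : hom f ->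
  nabla0 (fun w => c *: f w) = c *: nabla0 f.
Proof.
move=> hf; rewrite -[c *: _]addr0 -nab00 -nab0L //; last exact: hom_zero.
by congr nabla0; apply: functional_extensionality => x; rewrite addr0.
Qed.
Lemma nab0A (f : Om 1 -> M) a : hom f ->
  nabla0 (fun w => f (mul 0 1 a w)) = act (nabla0 f) a + f (d 0%N a).
Proof. by case: Hcon => _ H; apply: H. Qed.


Lemma feq N a (f : Om N -> M) (e1 e2 : a = N) (x : Om a) : f (dcast e1 x) = f (dcast e2 x).
Proof. by rewrite (dcast_irr e1 e2). Qed.

Lemma sgnSS j : (-1) ^+ j.+1 * (-1) ^+ j = -1 :> k.
Proof. by rewrite exprS mulN1r mulNr -exprD -signr_odd oddD addbb expr0. Qed.

Lemma nab_hom n f : hom f -> hom (nablan mul d nabla0 n f).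
Proof.
move=> hf; split=> [x y|w a]; rewrite /nablan.
  have -> : (fun w' => f (dcast (addn1 n) (mul _ _ (x + y) w'))) =
     fun w' => f (dcast (addn1 n) (mul _ _ x w')) + f (dcast (addn1 n) (mul _ _ y w')).
    by apply: functional_extensionality => w'; rewrite mulDl dcastD homD.
  rewrite nab0D; try exact: hom_homact.
  by rewrite dD (homD _ _ hf) scalerDr addrACA.
set G := fun w' : Om 1 => f (dcast (addn1 n) (mul _ _ w w')).
have hG : hom G by exact: hom_homact.
have -> : (fun w' => f (dcast (addn1 n) (mul _ _ (dcast (addn0 n) (mul _ _ w a)) w'))) =
   fun w' => G (mul 0 1 a w').
  apply: functional_extensionality => w'; rewrite /G dcast_mull mulA !dcast_comp.
  exact: feq.
rewrite nab0A // dcast_d leib dcastD dcastZ (homD _ _ hf) (homS _ _ hf).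
rewrite (feq f _ (addn0 n.+1)) (homA _ _ hf) dcast_comp (feq f _ (addn1 n)) -/(G (d 0%N a)).
rewrite actDl actZ scalerDr scalerA sgnSS scaleN1r.
by rewrite -addrA; congr (_ + _); rewrite addrC subrK.
Qed.
Hypothesis Hflat : is_flat mul d act nabla0.

Lemma sgn2 n : (-1) ^+ n.+2 * (-1) ^+ n = 1 :> k.
Proof. by rewrite !exprS !mulN1r opprK -exprD -signr_odd oddD addbb expr0. Qed.

Lemma nab_sq n f : hom f ->
  nablan mul d nabla0 n (nablan mul d nabla0 n.+1 f) = (fun _ => 0).
Proof.
move=> hf; apply: functional_extensionality => om.
set g := nablan mul d nabla0 n.+1 f.
set F2 := fun x : Om 2 => f (dcast (addn2 n) (mul _ _ om x)).
set Fd := fun x : Om 1 => f (dcast (addn1 n.+1) (mul _ _ (d n om) x)).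
have hF2 : hom F2 by exact: hom_homact.
have hFd : hom Fd by exact: hom_homact.
have C1 : (fun w' => g (dcast (addn1 n) (mul _ _ om w'))) =
   fun w' => (-1) ^+ n.+2 *: Fd w' + nablan mul d nabla0 1 F2 w'.
  apply: functional_extensionality => w'.
  rewrite /g /nablan dcast_d leib dcastD dcastZ (homD _ _ hf) (homS _ _ hf).
  have -> : (fun w'0 : Om 1 =>
    f (dcast (addn1 n.+1) (mul n.+1 1 (dcast (addn1 n) (mul n 1 om w')) w'0))) =
    (fun w'0 : Om 1 => F2 (dcast (addn1 1) (mul 1 1 w' w'0))).
    apply: functional_extensionality => w''.
    by rewrite /F2 dcast_mull mulA dcast_mulr !dcast_comp; apply: feq.
  rewrite scalerDr scalerA sgn2 scale1r expr2 mulN1r opprK scale1r.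
  rewrite /Fd /F2 dcast_comp.
  rewrite addrCA; congr (_ + (_ + _)); [congr (_ *: _) |]; apply: feq.
have C2 : g (d n om) = nabla0 Fd.
  by rewrite /g /nablan dd (hom0 hf) scaler0 addr0.
rewrite /nablan C1 C2 nab0L //; last exact: nab_hom.
rewrite Hflat // addr0 -scalerDl exprS mulN1r addNr scale0r.
by [].
Qed.
Lemma hcycle_cast N (f : Om N -> M) : hcycle mul d nabla0 f ->
  forall p (e : p.+1 = N), nablan mul d nabla0 p (fun x => f (dcast e x)) = fun _ => 0.
Proof. by move=> H p e; move: f H; case: N / e. Qed.

Lemma sgn3 n j : (-1) ^+ (n + j).+1 * (-1) ^+ n = (-1) ^+ j.+1 :> k.
Proof.
have sq : (-1) ^+ n * (-1) ^+ n = 1 :> k by rewrite -exprD -signr_odd oddD addbb expr0.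
by rewrite -addnS exprD mulrAC sq mul1r.
Qed.

Lemma b2 n m (f : Om (n + m)%N -> M) (w : Om n) : hom f ->
  hcycle mul d nabla0 f -> dclosed d w -> hcycle mul d nabla0 (homact mul f w).
Proof.
case: m f => [//|j] f hf Hc Hw.
have H := hcycle_cast Hc (esym (addnS n j)).
rewrite /= /homact; apply: functional_extensionality => om.
have := f_equal (fun g => g (mul _ _ w om)) H; rewrite /nablan /=.
rewrite leib Hw mul0l add0r dcastZ (homS _ _ hf) dcast_comp dcast_id scalerA sgn3.
move=> <-; congr (nabla0 _ + _); apply: functional_extensionality => w'.
by rewrite dcast_mulr mulA !dcast_comp; apply: feq.
Qed.
Lemma b3 n m (f : Om (n + m)%N -> M) (w : Om n) :
  hboundary mul d act nabla0 f -> dclosed d w -> hboundary mul d act nabla0 (homact mul f w).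
Proof.
move=> [h [hh ->]] Hw.
exists (fun x : Om m.+1 => h (dcast (addnS n m) (mul _ _ w x))); split.
  exact: hom_homact.
apply: functional_extensionality => om; rewrite /homact /nablan.
rewrite leib Hw mul0l add0r (homS _ _ hh) scalerA sgn3.
congr (nabla0 _ + _); apply: functional_extensionality => w'.
by rewrite dcast_mulr mulA !dcast_comp; apply: feq.
Qed.
Lemma hom_scale n c (f : Om n -> M) : hom f -> hom (fun w => c *: f w).
Proof.
move=> hf; split=> [x y|x a]; first by rewrite (homD _ _ hf) scalerDr.
by rewrite (homA _ _ hf) actZ.
Qed.

Lemma b4 n m (f : Om (n + m)%N -> M) (w : Om n) : hom f ->
  hcycle mul d nabla0 f -> dexact d w -> hboundary mul d act nabla0 (homact mul f w).
Proof.
case: n f w => [|j] f w hf Hc Hw.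
  exists (fun _ => 0); split; first exact: hom_zero.
  apply: functional_extensionality => om.
  by rewrite /homact /nablan /= Hw mul0l (hom0 hf) nab00 scaler0 addr0.
have Hc' : nablan mul d nabla0 (j + m) f = fun _ => 0 := Hc.
case: Hw => v <-.
set c : k := (-1) ^+ (j + m).
exists (fun x : Om m.+1 => c *: f (dcast (addnS j m) (mul _ _ v x))); split.
  by apply: hom_scale; exact: hom_homact.
apply: functional_extensionality => om.
have := f_equal (fun g => g (mul _ _ v om)) Hc'; rewrite /homact /nablan /=.
rewrite leib (homD _ _ hf) (homS _ _ hf).
set G := fun w' : Om 1 => f (dcast (addn1 (j + m)) (mul _ _ (mul _ _ v om) w')).
have hG : hom G by exact: hom_homact.
have -> : (fun w' : Om 1 => c *: f (dcast (addnS j m) (mul _ _ v (dcast (addn1 m) (mul _ _ om w'))))) = fun w' => c *: G w'.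
  apply: functional_extensionality => w'; congr (_ *: _).
  by rewrite /G dcast_mulr mulA !dcast_comp; apply: feq.
rewrite nab0Z //.
move/eqP; rewrite addr_eq0 => /eqP ->.
have e1 : c * (-1) ^+ (j + m).+1 = -1 by rewrite mulrC sgnSS.
have sq : (-1) ^+ m * (-1) ^+ m = 1 :> k by rewrite -exprD -signr_odd oddD addbb expr0.
have e2 : (-1) ^+ m.+1 * c = - (-1) ^+ j.
  by rewrite /c exprS mulN1r mulNr addnC exprD mulrA sq mul1r.
rewrite scalerN scalerA e1 scaleN1r opprK scalerA e2 scaleNr.
by rewrite addrK.
Qed.
Lemma a2 (f : Om 1 -> M) a : hom f -> nablan mul d nabla0 0 f a = act (nabla0 f) a.
Proof.
move=> hf; rewrite /nablan.
have -> : (fun w' : Om 1 => f (dcast (addn1 0) (mul _ _ a w'))) = fun w' => f (mul 0 1 a w').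
  by apply: functional_extensionality => w'; rewrite dcast_id.
by rewrite nab0A // expr1 scaleN1r addrK.
Qed.
End S.

Theorem corollary3p5 (k : fieldType) (Om : nat -> lmodType k)
  (mul : forall n m, Om n -> Om m -> Om (n + m)%N) (one : Om 0%N)
  (d : forall n, Om n -> Om n.+1)
  (M : lmodType k) (act : M -> Om 0%N -> M) (nabla0 : (Om 1%N -> M) -> M) :
  is_dga mul one d ->
  is_rmodule mul one act ->
  is_hom_connection mul d act nabla0 ->
  is_flat mul d act nabla0 ->
  (* (a) the nabla_n are well defined and form a chain complex *)
  ((forall n (f : Om n.+1 -> M), is_hom mul act f ->
       is_hom mul act (nablan mul d nabla0 n f)) /\
   (forall (f : Om 1%N -> M) (a : Om 0%N), is_hom mul act f ->
       nablan mul d nabla0 0 f a = act (nabla0 f) a) /\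
   (forall f : Om 2%N -> M, is_hom mul act f ->
       nabla0 (nablan mul d nabla0 1 f) = 0) /\
   (forall n (f : Om n.+2 -> M), (1 <= n)%N -> is_hom mul act f ->
       nablan mul d nabla0 n (nablan mul d nabla0 n.+1 f) = (fun _ => 0))) /\
  (* (b) the right action of Omega A descends to H^*(A) acting on H_*(A;M,nabla) *)
  (forall n m (f : Om (n + m)%N -> M) (w : Om n), is_hom mul act f ->
     [/\ is_hom mul act (homact mul f w),
         hcycle mul d nabla0 f -> dclosed d w -> hcycle mul d nabla0 (homact mul f w),
         hboundary mul d act nabla0 f -> dclosed d w ->
           hboundary mul d act nabla0 (homact mul f w) &
         hcycle mul d nabla0 f -> dexact d w ->
           hboundary mul d act nabla0 (homact mul f w)]).
Proof.
move=> Hdga Hmod Hcon Hflat; split.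
  split; first by move=> n f hf; apply: (nab_hom Hdga Hmod Hcon).
  split; first by move=> f a hf; apply: (a2 Hcon).
  split; first exact: Hflat.
  by move=> n f _ hf; apply: (nab_sq Hdga Hmod Hcon Hflat).
move=> n m f w hf; split.
- exact (hom_homact Hdga w (erefl (n + m)%N) hf).
- move=> Hc Hw; exact (b2 Hdga hf Hc Hw).
- move=> Hb Hw; exact (b3 Hdga Hb Hw).
- move=> Hc Hw; exact (b4 Hdga Hmod Hcon hf Hc Hw).
Qed.
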